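(* Let $\mathfrak{L}$ be a class of groups closed under finite index subgroups, let $I:\mathfrak{L}\to\mathbb{R}$ be an invariant, and let $G\in\mathfrak{L}$. Define \[\tilde{I}(G)=\inf_{H\leqslant_f G}\frac{I(H)}{|G:H|},\qquad \tilde{J}(G)=\inf_{H\trianglelefteq_f G}\frac{I(H)}{|G:H|},\] where the first infimum is over all finite index subgroups $H$ of $G$ and the second over all finite index normal subgroups of $G$. If $I$ is submultiplicative with respect to finite index subgroups, then $\tilde{I}(G)=\tilde{J}(G)$. If $I$ is submultiplicative with respect to finite index normal subgroups, then $\tilde{I}(G)=\tilde{J}(G)$.
   Context: $I$ is submultiplicative with respect to finite index (resp. finite index normal) subgroups if $\frac{I(H)}{|G:H|}\le I(G)$ for every $G\in\mathfrak{L}$ and every finite index (resp. finite index normal) subgroup $H$ of $G$. $\mathfrak{L}$ closed under finite index subgroups means that if $G\in\mathfrak{L}$ and $H$ has finite index in $G$ then $H\in\mathfrak{L}$. *)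

(* Defs.v *)
(* Abstract (possibly infinite) groups are
   given by an explicit record, since MathComp only handles finite groups. *)
From HB Require Import structures.
From mathcomp Require Import all_boot all_order all_algebra.
From mathcomp Require Import boolp classical_sets reals constructive_ereal ereal.
From Stdlib Require Import ProofIrrelevance.
Set Implicit Arguments. Unset Strict Implicit. Unset Printing Implicit Defensive.
Import Order.TTheory GRing.Theory Num.Theory.

Record grp := Grp {
  gcar :> Type;
  gmul : gcar -> gcar -> gcar;
  gone : gcar;
  ginv : gcar -> gcar;
  gmulA : forall x y z, gmul x (gmul y z) = gmul (gmul x y) z;
  gmul1l : forall x, gmul gone x = x;
  gmul1r : forall x, gmul x gone = x;
  gmulVl : forall x, gmul (ginv x) x = gone;
  gmulVr : forall x, gmul x (ginv x) = gone }.

Definition is_subgroup (G : grp) (S : G -> Prop) : Prop :=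
  [/\ S (gone G),
      (forall x y, S x -> S y -> S (gmul x y)) &
      (forall x, S x -> S (ginv x))].

Record subgroup (G : grp) := Subgroup {
  sg_pred :> G -> Prop;
  sg_prop : is_subgroup sg_pred }.

Definition is_normal (G : grp) (H : subgroup G) : Prop :=
  forall g x, H x -> H (gmul (gmul g x) (ginv g)).

(* has_index H n : |G : H| = n, witnessed by a left transversal of size n:
   every g lies in exactly one left coset r_i H. *)
Definition has_index (G : grp) (H : subgroup G) (n : nat) : Prop :=
  exists r : 'I_n -> G, forall g, exists! i, H (gmul (ginv (r i)) g).

Section SubGrp.
Variables (G : grp) (H : subgroup G).
Let T := {x : G | H x}.
Let HP := sg_prop H.
Definition sub_mul (x y : T) : T :=
  exist _ (gmul (proj1_sig x) (proj1_sig y))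
    (let: And3 _ hm _ := HP in hm _ _ (proj2_sig x) (proj2_sig y)).
Definition sub_one : T := exist _ (gone G) (let: And3 h1 _ _ := HP in h1).
Definition sub_inv (x : T) : T :=
  exist _ (ginv (proj1_sig x)) (let: And3 _ _ hi := HP in hi _ (proj2_sig x)).
Let eqT (x y : T) : proj1_sig x = proj1_sig y -> x = y.
Proof. case: x => x px; case: y => y py /= e; subst y; by rewrite (proof_irrelevance _ px py). Qed.
Lemma sub_mulA x y z : sub_mul x (sub_mul y z) = sub_mul (sub_mul x y) z.
Proof. apply: eqT; exact: gmulA. Qed.
Lemma sub_mul1l x : sub_mul sub_one x = x.
Proof. apply: eqT; exact: gmul1l. Qed.
Lemma sub_mul1r x : sub_mul x sub_one = x.
Proof. apply: eqT; exact: gmul1r. Qed.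
Lemma sub_mulVl x : sub_mul (sub_inv x) x = sub_one.
Proof. apply: eqT; exact: gmulVl. Qed.
Lemma sub_mulVr x : sub_mul x (sub_inv x) = sub_one.
Proof. apply: eqT; exact: gmulVr. Qed.
Definition sub_grp : grp :=
  Grp sub_mulA sub_mul1l sub_mul1r sub_mulVl sub_mulVr.
End SubGrp.

Definition grp_iso (G1 G2 : grp) : Prop :=
  exists f : G1 -> G2, bijective f /\ forall x y, f (gmul x y) = gmul (f x) (f y).

Definition closed_fi (L : grp -> Prop) : Prop :=
  forall (G : grp) (H : subgroup G) (n : nat),
    L G -> has_index H n -> L (sub_grp H).

Definition is_invariant (R : realType) (L : grp -> Prop) (I : grp -> R) : Prop :=
  forall G1 G2 : grp, L G1 -> L G2 -> grp_iso G1 G2 -> I G1 = I G2.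

Local Open Scope ring_scope.

Definition submult_fi (R : realType) (L : grp -> Prop) (I : grp -> R) : Prop :=
  forall (G : grp) (H : subgroup G) (n : nat),
    L G -> has_index H n -> I (sub_grp H) / n%:R <= I G.

Definition submult_fi_normal (R : realType) (L : grp -> Prop) (I : grp -> R) : Prop :=
  forall (G : grp) (H : subgroup G) (n : nat),
    L G -> is_normal H -> has_index H n -> I (sub_grp H) / n%:R <= I G.

Local Open Scope classical_set_scope.

Definition I_tilde (R : realType) (I : grp -> R) (G : grp) : \bar R :=
  ereal_inf [set x : \bar R | exists (H : subgroup G) (n : nat),
                 has_index H n /\ x = ((I (sub_grp H) / n%:R)%R)%:E].

Definition J_tilde (R : realType) (I : grp -> R) (G : grp) : \bar R :=
  ereal_inf [set x : \bar R | exists (H : subgroup G) (n : nat),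
                 is_normal H /\ has_index H n /\ x = ((I (sub_grp H) / n%:R)%R)%:E].

(* Main.v *)
Require Import Defs.
From mathcomp Require Import all_boot all_order all_algebra.
From mathcomp Require Import boolp classical_sets reals constructive_ereal ereal.
From Stdlib Require Import ProofIrrelevance.
Set Implicit Arguments. Unset Strict Implicit. Unset Printing Implicit Defensive.
Import Order.TTheory GRing.Theory Num.Theory.

Section GrpLemmas.
Variable G : grp.
Implicit Types x y z : G.
Lemma mulKg x y : gmul (ginv x) (gmul x y) = y.
Proof. by rewrite gmulA gmulVl gmul1l. Qed.
Lemma mulVKg x y : gmul x (gmul (ginv x) y) = y.
Proof. by rewrite gmulA gmulVr gmul1l. Qed.
Lemma ginv_uniq x y : gmul x y = gone G -> ginv x = y.
Proof. move=> e. by rewrite -[ginv x]gmul1r -e mulKg. Qed.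
Lemma ginvK x : ginv (ginv x) = x.
Proof. apply: ginv_uniq; exact: gmulVl. Qed.
Lemma ginvM x y : ginv (gmul x y) = gmul (ginv y) (ginv x).
Proof. apply: ginv_uniq. by rewrite -gmulA mulVKg gmulVr. Qed.
Lemma ginv1 : ginv (gone G) = gone G.
Proof. apply: ginv_uniq; exact: gmul1l. Qed.
End GrpLemmas.

Section SubLemmas.
Variables (G : grp) (H : subgroup G).
Lemma sg1 : H (gone G). Proof. by case: (sg_prop H). Qed.
Lemma sgM x y : H x -> H y -> H (gmul x y).
Proof. by case: (sg_prop H) => _ hm _; apply: hm. Qed.
Lemma sgV x : H x -> H (ginv x).
Proof. by case: (sg_prop H) => _ _ hi; apply: hi. Qed.
End SubLemmas.

Lemma index_of_fun (K : grp) (M : subgroup K) (F : finType) (f : K -> F) :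
  (forall x y, f x = f y <-> M (gmul (ginv x) y)) -> exists m, has_index M m.
Proof.
move=> hf.
pose A := [set a : F | `[< exists x, f x = a >]].
exists #|A|.
have ex : forall i : 'I_#|A|, exists x, f x = enum_val i.
  by move=> i; have := enum_valP i; rewrite inE => /asboolP.
exists (fun i => proj1_sig (cid (ex i))) => g.
have Ag : f g \in A by rewrite inE; apply/asboolP; exists g.
exists (enum_rank_in Ag (f g)); split.
  apply/hf; case: cid => x /= ->. by rewrite enum_rankK_in.
move=> j; case: cid => x /= ex2 /hf; rewrite ex2 => e.
apply: enum_val_inj. by rewrite e enum_rankK_in.
Qed.

Lemma prod_bij n m : exists e : 'I_(n * m) -> 'I_n * 'I_m,
  injective e /\ forall p, exists k, e k = p.
Proof.
exists (fun k => enum_val (cast_ord (esym (mxvec_cast n m)) k)); split.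
  by move=> k k' /enum_val_inj /cast_ord_inj.
move=> p; exists (cast_ord (mxvec_cast n m) (enum_rank p)).
by rewrite cast_ordK enum_rankK.
Qed.

Section Core.
Variables (G : grp) (H : subgroup G) (n : nat) (r : 'I_n -> G).
Hypothesis hr : forall g, exists! i, H (gmul (ginv (r i)) g).

Definition cidx (g : G) : 'I_n := proj1_sig (cid (hr g)).

Lemma cidxP g : H (gmul (ginv (r (cidx g))) g).
Proof. by rewrite /cidx; case: cid => i [] /=. Qed.
Lemma cidxU g j : H (gmul (ginv (r j)) g) -> cidx g = j.
Proof. by rewrite /cidx; case: cid => i [] /= _; apply. Qed.

Lemma cidx_eq a b : cidx a = cidx b <-> H (gmul (ginv a) b).
Proof.
split.
  move=> e; have ha := cidxP a; have hb := cidxP b; rewrite -e in hb.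
  by have := sgM (sgV ha) hb; rewrite ginvM ginvK -gmulA mulVKg.
move=> hab; apply/esym/cidxU.
by have := sgM (cidxP a) hab; rewrite -gmulA mulVKg.
Qed.

Definition Ncore (x : G) : Prop := forall g, H (gmul (gmul (ginv g) x) g).

Lemma Ncore_sub : is_subgroup Ncore.
Proof.
split.
- by move=> g; rewrite gmul1r gmulVl; exact: sg1.
- move=> x y hx hy g; have := sgM (hx g) (hy g).
  by rewrite -!gmulA mulVKg.
- move=> x hx g; have := sgV (hx g).
  by rewrite !ginvM ginvK -!gmulA.
Qed.

Definition Nsg : subgroup G := Subgroup Ncore_sub.

Lemma Ncore_H x : Ncore x -> H x.
Proof. by move=> /(_ (gone G)); rewrite ginv1 gmul1l gmul1r. Qed.

Lemma Ncore_normal : is_normal Nsg.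
Proof.
move=> g x hx h /=; have := hx (gmul (ginv g) h).
by rewrite ginvM ginvK -!gmulA.
Qed.

Lemma Ncore_eq a b :
  (forall i, cidx (gmul a (r i)) = cidx (gmul b (r i))) <-> Ncore (gmul (ginv a) b).
Proof.
split.
  move=> e g; set z := gmul (ginv a) b.
  have hi : H (gmul (gmul (ginv (r (cidx g))) z) (r (cidx g))).
    have := (cidx_eq _ _).1 (e (cidx g)).
    by rewrite ginvM -!gmulA.
  have := sgM (sgM (sgV (cidxP g)) hi) (cidxP g).
  by rewrite ginvM ginvK -!gmulA !mulVKg.
move=> hn i; apply/cidx_eq; have := hn (r i).
by rewrite ginvM -!gmulA.
Qed.


Lemma Msub : is_subgroup (fun x : sub_grp H => Ncore (proj1_sig x)).
Proof.
case: Ncore_sub => h1 hm hi; split => //=.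
- by move=> x y hx hy; apply: hm.
- by move=> x hx; apply: hi.
Qed.

Definition Msg : subgroup (sub_grp H) := Subgroup Msub.

Lemma Msg_index : exists m, has_index Msg m.
Proof.
apply: (@index_of_fun _ _ _ (fun h : sub_grp H => [ffun i => cidx (gmul (proj1_sig h) (r i))])).
move=> x y /=; rewrite -Ncore_eq; split.
  by move=> e i; move/ffunP: e => /(_ i); rewrite !ffunE.
by move=> e; apply/ffunP => i; rewrite !ffunE.
Qed.

Lemma Msg_normal : is_normal Msg.
Proof. by move=> g x /= hx; exact: (@Ncore_normal (proj1_sig g) _ hx). Qed.

Lemma N_index m : has_index Msg m -> has_index Nsg (n * m).
Proof.
move=> [s hs]; have [e [einj esurj]] := prod_bij n m.
exists (fun k => gmul (r (e k).1) (proj1_sig (s (e k).2))) => g.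
pose h : sub_grp H := exist _ (gmul (ginv (r (cidx g))) g) (cidxP g).
have [j [hj ju]] := hs h.
have [k ek] := esurj (cidx g, j).
exists k; split.
  by rewrite ek /=; move: hj => /=; rewrite ginvM -gmulA.
move=> k' hk'; apply: einj; rewrite ek.
case E: (e k') hk' => [i' j'] /= hk'.
have hi' : cidx g = i'.
  apply: cidxU; have := sgM (proj2_sig (s j')) (Ncore_H hk').
  by rewrite ginvM -!gmulA mulVKg.
subst i'; congr pair; apply: ju => /=.
by move: hk'; rewrite ginvM -gmulA.
Qed.

End Core.

Lemma sig_eq (A : Type) (P : A -> Prop) (x y : {a | P a}) :
  proj1_sig x = proj1_sig y -> x = y.
Proof.
case: x => x px; case: y => y py /= e; subst y.
by rewrite (proof_irrelevance _ px py).
Qed.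

Lemma MN_iso (G : grp) (H : subgroup G) (n : nat) (r : 'I_n -> G)
  (hr : forall g, exists! i, H (gmul (ginv (r i)) g)) :
  grp_iso (sub_grp (Msg H)) (sub_grp (Nsg H)).
Proof.
pose f (x : sub_grp (Msg H)) : sub_grp (Nsg H) :=
  exist _ (proj1_sig (proj1_sig x)) (proj2_sig x).
pose g (x : sub_grp (Nsg H)) : sub_grp (Msg H) :=
  exist (fun y : sub_grp H => Ncore H (proj1_sig y))
    (exist _ (proj1_sig x) (Ncore_H (proj2_sig x))) (proj2_sig x).
exists f; split.
  exists g.
    by move=> x; apply: sig_eq; apply: sig_eq.
  by move=> x; apply: sig_eq.
by move=> x y; apply: sig_eq.
Qed.

Lemma key (R : realType) (L : grp -> Prop) (I : grp -> R)
  (hL : closed_fi L) (hI : is_invariant L I) (G : grp) (hG : L G)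
  (hsub : forall (K : grp) (M : subgroup K) m, L K -> is_normal M ->
      has_index M m -> (I (sub_grp M) / m%:R <= I K)%R)
  (H : subgroup G) (n : nat) (hH : has_index H n) :
  exists (N : subgroup G) (k : nat), is_normal N /\ has_index N k /\
    (I (sub_grp N) / k%:R <= I (sub_grp H) / n%:R)%R.
Proof.
have hH' := hH; case: hH' => r hr.
have [m hm] := Msg_index hr.
exists (Nsg H), (n * m)%N; split; first exact: Ncore_normal.
split. have := @N_index _ _ _ _ hr _ hm. move=> X. exact X.
have LH := hL G H n hG hH.
have LM := hL _ _ m LH hm.
have LN := hL _ _ _ hG (@N_index _ _ _ _ hr _ hm).
rewrite -(hI _ _ LM LN (MN_iso hr)).
have ineq := hsub _ _ m LH (@Msg_normal _ H) hm.
have n0 : (0 < n)%N.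
  by have [i _] := hr (gone G); apply: leq_ltn_trans (ltn_ord i).
rewrite natrM invfM [(n%:R^-1 * _)%R]mulrC mulrA.
apply: ler_wpM2r => //; by rewrite invr_ge0 ler0n.
Qed.

Theorem mainTheorem1 (R : realType) (L : grp -> Prop) (I : grp -> R)
  (hL : closed_fi L) (hI : is_invariant L I) (G : grp) (hG : L G) :
  (submult_fi L I -> I_tilde I G = J_tilde I G) /\
  (submult_fi_normal L I -> I_tilde I G = J_tilde I G).
Proof.
have main : (forall (K : grp) (M : subgroup K) m, L K -> is_normal M ->
      has_index M m -> (I (sub_grp M) / m%:R <= I K)%R) ->
    I_tilde I G = J_tilde I G.
  move=> hsub; apply/le_anti/andP; split.
    apply: ereal_inf_le_tmp => x [H [k [_ [hk ->]]]].
    by exists H, k.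
  apply: le_ereal_inf_tmp => x [H [k [hk ->]]].
  have [N [k' [nN [hN le]]]] := key hL hI hG hsub hk.
  apply: ge_ereal_inf; exists ((I (sub_grp N) / k'%:R)%R)%:E.
    by exists N, k'.
  by rewrite lee_fin.
split.
  by move=> hs; apply: main => K M m LK _ hM; exact: hs LK hM.
by move=> hs; apply: main => K M m LK nM hM; exact: hs LK nM hM.
Qed.
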